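(* Let $\mathbf{h}\in\mathbb{F}_2^n$ and let $\mathbf{H}$ be the $m\times n$ binary matrix, $1\le m\le n$, whose $r$-th row ($r=1,\ldots,m$) is the cyclic shift of $\mathbf{h}$ to the right by $r-1$ positions. For $1\le\sigma\le n$ let $\Sigma_{\sigma,r}$ be the set of $\sigma$-subsets of columns resolved by row $r$. Then the number of $\sigma$-subsets of columns resolved by $\mathbf{H}$ satisfies $$\Big|\bigcup_{r=1}^m\Sigma_{\sigma,r}\Big|\;\le\; m\,|\Sigma_{\sigma,1}|-\frac{2}{m}\sum_{\kappa=1}^{m-1}(m-\kappa)\,|\Sigma_{\sigma,1}\cap\Sigma_{\sigma,1+\kappa}|.$$
   Context: A row of a binary matrix resolves a set $I$ of column indices if its restriction to the columns in $I$ has Hamming weight exactly one. *)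

(* Defs.v *)
From HB Require Import structures.
From mathcomp Require Import all_boot all_order all_algebra.
Set Implicit Arguments. Unset Strict Implicit. Unset Printing Implicit Defensive.
Import Order.TTheory GRing.Theory Num.Theory.

(* (j - k) mod n, as an element of 'I_n (columns are 0-indexed). *)
Definition csub (n : nat) (j : 'I_n) (k : nat) : 'I_n :=
  Ordinal (ltn_pmod (j + n - k %% n) (leq_ltn_trans (leq0n j) (ltn_ord j))).

(* The m x n binary matrix whose row r (0-indexed, r = 0..m-1) is the cyclic
   right shift of h by r positions: H r j = h_{(j - r) mod n}. *)
Definition cshift_mx (m n : nat) (h : 'rV['F_2]_n) : 'M['F_2]_(m, n) :=
  \matrix_(r < m, j < n) h ord0 (csub j r).

Definition resolves (n : nat) (v : 'rV['F_2]_n) (I : {set 'I_n}) : bool :=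
  #|[set j in I | v ord0 j != 0%R]| == 1.

Definition Sigma (m n : nat) (H : 'M['F_2]_(m, n)) (sigma : nat) (r : 'I_m)
  : {set {set 'I_n}} :=
  [set I : {set 'I_n} | (#|I| == sigma) && resolves (row r H) I].

(* Main.v *)
Require Import Defs.
From HB Require Import structures.
From mathcomp Require Import all_boot all_order all_algebra.
Import Order.TTheory GRing.Theory Num.Theory.
From Stdlib Require Import Lia.

Lemma csubC n (x : 'I_n) a b : csub (csub x a) b = csub x (a + b).
Proof.
apply: val_inj; rewrite /csub /=.
have n0 : 0 < n by apply: leq_ltn_trans (ltn_ord x).
have key : forall c, (n - c %% n + c) %% n = 0.
  by move=> c; rewrite -modnDmr subnK ?modnn // ltnW // ltn_pmod.
have ha : a %% n <= n by apply: ltnW; exact: ltn_pmod.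
have hb : b %% n <= n by apply: ltnW; exact: ltn_pmod.
have hab : (a + b) %% n <= n by apply: ltnW; exact: ltn_pmod.
rewrite -!addnBA //.
apply/eqP; rewrite -(eqn_modDr (a + b)).
set A := n - a %% n; set B := n - b %% n; set C := n - (a + b) %% n.
have kA : (A + a) %% n = 0 by apply: key.
have kB : (B + b) %% n = 0 by apply: key.
have kC : (C + (a + b)) %% n = 0 by apply: key.
rewrite -addnA modnDml.
have -> : x + A + (B + (a + b)) = x + (B + b) + (A + a).
  by rewrite -!plusE; lia.
rewrite -modnDmr kA addn0 -modnDmr kB addn0.
by rewrite -addnA -modnDmr kC addn0.
Qed.

Lemma sum_shift (c : nat -> nat) m :
  \sum_(i < m) c (m - i) = \sum_(k < m.+1 | 0 < k) c k.
Proof.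
rewrite [RHS]big_mkcond big_ord_recl /= add0n (reindex_inj rev_ord_inj) /=.
apply: eq_bigr => j _; congr c.
rewrite /bump /= add1n subKn //.
Qed.

Lemma reidx (c : nat -> nat) m :
  \sum_(i < m) \sum_(j < m | i < j) c (j - i) = \sum_(k < m | 0 < k) (m - k) * c k.
Proof.
elim: m => [|m IH]; first by rewrite !big_ord0.
rewrite big_ord_recr /= (big_pred0 _ _ _ (P := fun j : 'I_m.+1 => m < j)); last first.
  by move=> j /=; rewrite ltnNge -ltnS ltn_ord.
rewrite addn0.
have -> : \sum_(i < m) \sum_(j < m.+1 | widen_ord (leqnSn m) i < j) c (j - widen_ord (leqnSn m) i)
   = \sum_(i < m) (\sum_(j < m | i < j) c (j - i) + c (m - i)).
  apply: eq_bigr => i _; rewrite big_mkcond big_ord_recr /= ltn_ord -big_mkcond /=.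
  done.
rewrite big_split /= IH sum_shift.
rewrite (eq_bigr (fun k : 'I_m.+1 => (m - k) * c k + c k)); last first.
  by move=> k _; rewrite subSn ?mulSn ?[c k + _]addnC // -ltnS ltn_ord.
rewrite big_split /=; congr (_ + _).
rewrite [RHS]big_mkcond big_ord_recr /= subnn mul0n if_same addn0 -big_mkcond /=.
done.
Qed.

Lemma cardS (T : finType) (A : {pred T}) : #|A| = \sum_x (x \in A : nat).
Proof. by rewrite -sum1_card big_mkcond /=; apply: eq_bigr => x _; case: (x \in A). Qed.

Arguments cardS {T}.

Lemma pairs_sq (m : nat) (y : 'I_m -> bool) :
  (\sum_(r < m) (y r : nat)) * (\sum_(r < m) (y r : nat)) =
  2 * (\sum_(i < m) \sum_(j < m | i < j) (y i * y j)) + \sum_(r < m) (y r : nat).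
Proof.
rewrite big_distrl /=.
rewrite (eq_bigr (fun i : 'I_m => \sum_(j < m | i < j) (y i * y j) + (y i : nat)
             + \sum_(j < m | j < i) (y i * y j))); last first.
  move=> i _; rewrite big_distrr /= (bigID (fun j : 'I_m => i < j)) /= -addnA; congr (_ + _).
  rewrite (bigD1 i) /=; last by rewrite ltnn.
  rewrite mulnb andbb; congr (_ + _); apply: eq_bigl => j.
  by rewrite -leqNgt ltn_neqAle andbC.
rewrite !big_split /= mul2n -addnn -!addnA; congr (_ + _).
rewrite addnC; congr (_ + _).
rewrite (eq_bigr (fun i : 'I_m => \sum_(j < m) (if j < i then y i * y j else 0))); last first.
  by move=> i _; rewrite big_mkcond.
rewrite exchange_big /=; apply: eq_bigr => j _.
by rewrite [RHS]big_mkcond /=; apply: eq_bigr => i _; rewrite mulnC.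
Qed.

Lemma count_gen (T : finType) (B : nat -> {set T}) m :
  m * #|\bigcup_(r < m) B r| + 2 * \sum_(i < m) \sum_(j < m | i < j) #|B i :&: B j|
    <= m * \sum_(r < m) #|B r|.
Proof.

rewrite cardS.
under [X in 2 * X]eq_bigr => i _ do under eq_bigr => j _ do rewrite cardS.
under [X in _ <= m * X]eq_bigr => i _ do rewrite cardS.
under [X in 2 * X]eq_bigr => i _ do rewrite exchange_big.
rewrite [X in 2 * X]exchange_big /= [X in _ <= m * X]exchange_big /= !big_distrr /= -big_split /=.
apply: leq_sum => x _.
set Q := \sum_(i < m) \sum_(j < m | _) _.
set d := \sum_(r < m) _.

have hQ : d * d = 2 * Q + d.
  rewrite /d /Q (pairs_sq m (fun r : 'I_m => x \in B r)); congr (2 * _ + _); apply: eq_bigr => i _; apply: eq_bigr => j _.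
  by rewrite in_setI mulnb.
have hdm : d <= m.
  rewrite /d -[X in _ <= X]card_ord -sum1_card; apply: leq_sum => i _; by case: (x \in B i).
have hb : (x \in \bigcup_(r < m) B r : nat) <= d.
  case: bigcupP => // -[r _ hr].
  by rewrite /d (bigD1 r) //= hr.
move: hQ hdm hb; case: (x \in _) => /= hQ /ssrnat.leP hdm /ssrnat.leP hb; apply/ssrnat.leP;
  rewrite -?plusE -?multE in hQ *; nia.
Qed.

Lemma csub_zero n (x : 'I_n) c : c %% n = 0 -> csub x c = x.
Proof.
move=> hc; apply: val_inj; rewrite /csub /= hc subn0 modnDr modn_small //.
Qed.

Lemma csub_inj n i : injective (fun x : 'I_n => csub x i).
Proof.
move=> x y /= /(congr1 (fun z => csub z (n - i %% n))); rewrite !csubC.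
have n0 : 0 < n by case: n x {y} => [[]|].
have hz : (i + (n - i %% n)) %% n = 0.
  by rewrite -modnDml subnKC ?modnn // ltnW // ltn_pmod.
by rewrite !csub_zero.
Qed.

Definition Bset {n} (h : 'rV['F_2]_n) sigma (r : nat) : {set {set 'I_n}} :=
  [set I : {set 'I_n} | (#|I| == sigma) && (#|[set j in I | h ord0 (csub j r) != 0%R]| == 1)].

Lemma Bshift n (h : 'rV['F_2]_n) sigma i k (I : {set 'I_n}) :
  ((fun x => csub x i) @^-1: I \in Bset h sigma (i + k)) = (I \in Bset h sigma k).
Proof.
rewrite !inE card_preimset; last exact: csub_inj.
congr (_ && (_ == 1)).
have -> : [set j in (fun x => csub x i) @^-1: I | h ord0 (csub j (i + k)) != 0%R]
  = (fun x => csub x i) @^-1: [set y in I | h ord0 (csub y k) != 0%R].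
  by apply/finset.setP => x; rewrite !inE csubC.
by rewrite card_preimset //; exact: csub_inj.
Qed.

Lemma preim_inj n i : injective (fun I : {set 'I_n} => (fun x => csub x i) @^-1: I).
Proof.
move=> I1 I2 /= E; apply/finset.setP => y.
have n0 : 0 < n := leq_ltn_trans (leq0n _) (ltn_ord y).
have hy : csub (csub y (n - i %% n)) i = y.
  rewrite csubC csub_zero //.
  by rewrite -modnDmr addnC subnKC ?modnn // ltnW // ltn_pmod.
by have := congr1 (fun S : {set 'I_n} => csub y (n - i %% n) \in S) E; rewrite /= !inE hy.
Qed.

Lemma Bcard n (h : 'rV['F_2]_n) sigma i j : (i <= j)%N ->
  #|Bset h sigma i :&: Bset h sigma j| = #|Bset h sigma 0 :&: Bset h sigma (j - i)|.
Proof.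
move=> hij.
rewrite -(card_preimset _ (preim_inj n i)); apply: eq_card => I.
rewrite [in RHS]in_setI -(Bshift _ h sigma i 0 I) addn0 -(Bshift _ h sigma i (j - i) I) subnKC //.
by rewrite [in LHS]inE in_setI.
Qed.

Local Open Scope ring_scope.
Lemma fin (m U S P : nat) : (0 < m)%N -> (m * U + 2 * P <= m * (m * S))%N ->
  (U%:R : rat) <= m%:R * S%:R - 2%:R / m%:R * P%:R.
Proof.
move=> hm h.
have hm' : (0 : rat) < m%:R by rewrite ltr0n.
rewrite lerBrDr -(ler_pM2l hm') mulrDr mulrA mulrA (mulrC m%:R 2%:R) -(mulrA 2%:R) mulfV ?gt_eqF // mulr1.
by rewrite -!natrM -natrD ler_nat.
Qed.

Theorem mainTheorem7 (n m : nat) (h : 'rV['F_2]_n) (sigma : nat)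
  (hm : (0 < m)%N) (hmn : (m <= n)%N) (hs1 : (1 <= sigma)%N) (hsn : (sigma <= n)%N) :
  let H := cshift_mx m h in
  let r1 : 'I_m := Ordinal hm in
  (#|\bigcup_(r < m) Sigma H sigma r|%:R : rat)
    <= m%:R * #|Sigma H sigma r1|%:R
       - 2%:R / m%:R *
         \sum_(k < m | (0 < k)%N)
            ((m - k)%:R * #|Sigma H sigma r1 :&: Sigma H sigma k|%:R).
Proof.
cbv zeta; set H := cshift_mx m h.
have SB : forall r : 'I_m, Sigma H sigma r = Bset h sigma r.
  move=> r; apply/setP => I; rewrite !inE /resolves.
  have -> : [set j in I | row r H ord0 j != 0%R] = [set j in I | h ord0 (csub j r) != 0%R].
    by apply/setP => j; rewrite !inE !mxE.
  done.
under eq_bigr => k _ do rewrite !SB.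
rewrite !SB /=.
under [X in _ / _ * X]eq_bigr => k _ do rewrite SB -natrM.
rewrite -natr_sum.
apply: fin => //.
have key := count_gen _ (Bset h sigma) m.
have ES : (\sum_(r < m) #|Bset h sigma r| = m * #|Bset h sigma 0|)%N.
  rewrite (eq_bigr (fun _ => #|Bset h sigma 0|)); last first.
    by move=> r _; rewrite -{1}(setIid (Bset h sigma r)) Bcard // subnn setIid.
  by rewrite sum_nat_const card_ord.
have EP : (\sum_(i < m) \sum_(j < m | i < j) #|Bset h sigma i :&: Bset h sigma j|
   = \sum_(k < m | 0 < k) (m - k) * #|Bset h sigma 0 :&: Bset h sigma k|)%N.
  rewrite -(reidx (fun k => #|Bset h sigma 0 :&: Bset h sigma k|)).
  apply: eq_bigr => i _; apply: eq_bigr => j hij; apply: Bcard; exact: ltnW.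
by rewrite -ES -EP.
Qed.
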